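(* Let $k\ge1$ be an integer and $g:\mathbb{N}\to\mathbb{R}$ be such that $F_0(g;J,L)$ is finite for all integers $J$ with $k>J$ and all $L\ge0$. Then for every $J<k$, every $L\ge0$ and every $m=1,\dots,J-1$, $F_m(g;J,L)$ is finite and $$F_m(g;J,L)=F_{m-1}(g;J,L)-F_{m-1}(g;J-1,L)-\frac1k F_{m-1}(g;J-1,L+1).$$ In addition, this recursion also holds for $m=J$ if $g(i)=1$ for all $i\in\mathbb{N}$.
   Context: $\mathbb{N}=\{0,1,2,\dots\}$. For integers $J\ge1$, $0\le m\le J$, $L\ge0$ and $g:\mathbb{N}\to\mathbb{R}$, with $\mathbf{n}=(n_1,\dots,n_J)$ and $|\mathbf{n}|=n_1+\dots+n_J$, $$F_m(g;J,L)=\sum_{\substack{n_1\ge2,\dots,n_m\ge2\\ n_{m+1}\ge0,\dots,n_J\ge0}}\frac{(L+|\mathbf{n}|)!}{n_1!\cdots n_J!}\Big(\frac1k\Big)^{|\mathbf{n}|}g(n_J).$$ *)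

(* Defs.v *)
From HB Require Import structures.
From mathcomp Require Import all_boot all_order all_algebra.
From mathcomp Require Import all_classical all_reals all_analysis.
Set Implicit Arguments. Unset Strict Implicit. Unset Printing Implicit Defensive.
Import Order.TTheory GRing.Theory Num.Theory.
Local Open Scope classical_set_scope.
Local Open Scope ring_scope.

(* Multi-indices n = (n_1,...,n_J) are finite functions 'I_J -> nat;
   component n_{i+1} is n i (0-based ordinals). *)

Definition mabs (J : nat) (n : {ffun 'I_J -> nat}) : nat := (\sum_(i < J) n i)%N.

(* n_J, the last component (convention: 0 when J = 0, only relevant for
   F_{m-1}(g;0,L) in the m = J = 1 case with g = 1) *)
Definition mlast (J : nat) (n : {ffun 'I_J -> nat}) : nat :=
  last 0%N [seq n i | i <- enum 'I_J].

Definition Fdom (J m : nat) : set {ffun 'I_J -> nat} :=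
  [set n | forall i : 'I_J, (i < m)%N -> (2 <= n i)%N].

Definition Fterm (R : realType) (k : nat) (g : nat -> R) (J L : nat)
  (n : {ffun 'I_J -> nat}) : \bar R :=
  ((((L + mabs n)`!)%:R / (\prod_(i < J) (n i)`!)%:R
     * (k%:R^-1) ^+ mabs n * g (mlast n))%:E)%E.

Arguments Fterm {R} k g J L n.
Arguments Fdom : clear implicits.

(* "F_m(g;J,L) is finite": the series converges absolutely *)
Definition Ffinite (R : realType) (k : nat) (g : nat -> R) (m J L : nat) : Prop :=
  summable (Fdom J m) (Fterm k g J L).

Definition F (R : realType) (k : nat) (g : nat -> R) (m J L : nat) : R :=
  fine (esum (Fdom J m) (Fterm k g J L)^\+ - esum (Fdom J m) (Fterm k g J L)^\-)%E.

(* Main.v *)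
Require Import Defs.
From mathcomp Require Import all_boot all_order all_algebra.
From mathcomp Require Import all_classical all_reals all_analysis.
From mathcomp Require Import zify ring lra.
Import Order.TTheory GRing.Theory Num.Theory.
Local Open Scope classical_set_scope.
Local Open Scope ring_scope.

Definition ins (J : nat) (p : 'I_J.+1) (c : nat) (n : {ffun 'I_J -> nat}) :
  {ffun 'I_J.+1 -> nat} :=
  [ffun i => if unlift p i is Some j then n j else c].

Definition del (J : nat) (p : 'I_J.+1) (n : {ffun 'I_J.+1 -> nat}) :
  {ffun 'I_J -> nat} := [ffun j => n (lift p j)].

Arguments ins {J}.
Arguments del {J}.
Lemma ins_lift {J} p c n j : @ins J p c n (lift p j) = n j.
Proof. by rewrite /ins ffunE liftK. Qed.

Lemma ins_p {J} p c n : @ins J p c n p = c.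
Proof. by rewrite /ins ffunE unlift_none. Qed.

Lemma ins_inj {J} p c : injective (@ins J p c).
Proof.
move=> n1 n2 e; apply/ffunP => j.
by rewrite -(ins_lift p c n1) -(ins_lift p c n2) e.
Qed.

Lemma ins_del {J} (p : 'I_J.+1) (n : {ffun 'I_J.+1 -> nat}) : @ins J p (n p) (del p n) = n.
Proof.
apply/ffunP => i; rewrite /ins /del ffunE.
by case: unliftP => [j ->|->]; rewrite ?ffunE.
Qed.

Lemma mabs_ins {J} p c n : mabs (@ins J p c n) = (c + mabs n)%N.
Proof.
rewrite /mabs (bigD1_ord p) //= ins_p; congr (_ + _)%N.
by apply: eq_bigr => i _; rewrite ins_lift.
Qed.

Lemma prod_ins {J} p c n :
  (\prod_(i < J.+1) (@ins J p c n i)`!)%N = (c`! * \prod_(i < J) (n i)`!)%N.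
Proof.
rewrite (bigD1_ord p) //= ins_p; congr (_ * _)%N.
by apply: eq_bigr => i _; rewrite ins_lift.
Qed.

Lemma mlastS {J} (n : {ffun 'I_J.+1 -> nat}) : mlast n = n ord_max.
Proof. by rewrite /mlast enum_ordSr map_rcons last_rcons. Qed.

Lemma mlast_ins {J} (p : 'I_J.+1) c n : (p < J)%N -> mlast (@ins J p c n) = mlast n.
Proof.
case: J p n => [|J] p n; first by rewrite ltn0.
move=> pJ; rewrite !mlastS.
have -> : (ord_max : 'I_J.+2) = lift p ord_max.
  by apply/val_inj; rewrite /= /bump -ltnS pJ.
by rewrite ins_lift.
Qed.

Lemma Fdom_ins {J} (p : 'I_J.+1) c n :
  Fdom J.+1 p (@ins J p c n) <-> Fdom J p n.
Proof.
split => H i ip.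
  have := H (lift p i); rewrite ins_lift; apply.
  rewrite /= /bump; have -> : (p <= i)%N = false by rewrite leqNgt ip.
  by [].
case: (unliftP p i) => [j eij|eip]; last by rewrite eip ltnn in ip.
rewrite eij ins_lift; apply: H.
by move: ip; rewrite eij /= /bump; case: (leqP p j) => /= h; lia.
Qed.

Lemma Fterm_ins0 (R : realType) k (g : nat -> R) {J} (p : 'I_J.+1) L n :
  g (mlast (ins p 0 n)) = g (mlast n) ->
  Fterm k g J.+1 L (ins p 0 n) = Fterm k g J L n.
Proof. by move=> Hg; rewrite /Fterm mabs_ins prod_ins Hg add0n fact0 mul1n. Qed.

Lemma Fterm_ins1 (R : realType) k (g : nat -> R) {J} (p : 'I_J.+1) L n :
  g (mlast (ins p 1 n)) = g (mlast n) ->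
  Fterm k g J.+1 L (ins p 1 n) =
  (k%:R^-1 * ((((L.+1 + mabs n)`!)%:R / (\prod_(i < J) (n i)`!)%:R
     * (k%:R^-1) ^+ mabs n * g (mlast n))))%:E.
Proof.
move=> Hg; rewrite /Fterm mabs_ins prod_ins Hg (_ : 1`! = 1)%N // mul1n add1n addnS -addSn.
congr (_%:E); rewrite exprS; ring.
Qed.

Lemma esumZ (R : realType) (T : choiceType) (D : set T) (a : T -> \bar R) (c : R) :
  0 < c -> (forall x, (0 <= a x)%E) ->
  (\esum_(x in D) (c%:E * a x) = c%:E * \esum_(x in D) a x)%E.
Proof.
move=> c0 a0; rewrite /esum -ereal_sup_pZl //; congr ereal_sup.
have E : forall X, finite_set X ->
  (\sum_(x \in X) (c%:E * a x) = c%:E * \sum_(x \in X) a x)%E.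
  by move=> X fX; rewrite !fsbig_finite // ge0_sume_distrr.
apply/seteqP; split => y /=.
  move=> [X [fX XD] <-]; exists (\sum_(x \in X) a x)%E; first by exists X.
  by rewrite E.
move=> [x [X [fX XD] <-] <-]; exists X => //; by rewrite E.
Qed.

Lemma esum_split (R : realType) k (g : nat -> R) {J} (p : 'I_J.+1) L
  (h : \bar R -> \bar R) :
  (0 < k)%N ->
  (forall x, (0 <= h x)%E) ->
  (forall (c x : R), 0 < c -> h (c * x)%:E = (c%:E * h x%:E)%E) ->
  (forall n c, (c <= 1)%N -> g (mlast (ins p c n)) = g (mlast n)) ->
  (\esum_(n in Fdom J.+1 p) h (Fterm k g J.+1 L n) =
  \esum_(n in Fdom J.+1 p.+1) h (Fterm k g J.+1 L n) +
  \esum_(n in Fdom J p) h (Fterm k g J L n) +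
  (k%:R^-1)%:E * \esum_(n in Fdom J p) h (Fterm k g J L.+1 n))%E.
Proof.
move=> k0 h0 hZ Hg.
rewrite (esumID (Fdom J.+1 p.+1)) //.
have -> : Fdom J.+1 p `&` Fdom J.+1 p.+1 = Fdom J.+1 p.+1.
  apply/setIidr => n H i ip; apply: H; exact: ltnW.

rewrite [X in (_ + X)%E](esumID [set n : {ffun 'I_J.+1 -> nat} | n p = 0%N]) //.
have E0 : Fdom J.+1 p `&` ~` Fdom J.+1 p.+1 `&` [set n : {ffun 'I_J.+1 -> nat} | n p = 0%N]
          = ins p 0 @` Fdom J p.
  apply/seteqP; split => n /=.
    move=> [[Hp _] H0]; exists (del p n).
      by apply/(Fdom_ins p (n p)); rewrite ins_del.
    by have := ins_del p n; rewrite H0.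
  move=> [n' Hn' <-]; split; [split|]; last by rewrite ins_p.
    exact/(Fdom_ins p 0).
  by move=> H; have := H p (ltnSn p); rewrite ins_p.
have E1 : Fdom J.+1 p `&` ~` Fdom J.+1 p.+1 `&` ~` [set n : {ffun 'I_J.+1 -> nat} | n p = 0%N]
          = ins p 1 @` Fdom J p.
  apply/seteqP; split => n /=.
    move=> [[Hp Hnp] H0].
    have Hlt : (n p < 2)%N.
      rewrite ltnNge; apply/negP => H2; apply: Hnp => i.
      rewrite ltnS leq_eqVlt => /orP [/eqP ei| ip].
        by have -> : i = p by apply/val_inj.
      exact: Hp.
    have H1 : n p = 1%N by lia.
    exists (del p n).
      by apply/(Fdom_ins p (n p)); rewrite ins_del.
    by have := ins_del p n; rewrite H1.
  move=> [n' Hn' <-]; split; [split|]; last by rewrite ins_p.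
    exact/(Fdom_ins p 1).
  by move=> H; have := H p (ltnSn p); rewrite ins_p.
rewrite E0 E1 !esum_image; try by move=> x y _ _; apply: ins_inj.
rewrite -addeA; congr (_ + (_ + _))%E.
  by apply: eq_esum => n _; rewrite Fterm_ins0 // Hg.
rewrite -esumZ ?invr_gt0 ?ltr0n //.
apply: eq_esum => n _; rewrite Fterm_ins1 ?Hg // hZ // invr_gt0 ltr0n //.
Qed.

Lemma esum_subset (R : realType) (T : choiceType) (A B : set T) (a : T -> \bar R) :
  A `<=` B -> (forall x, (0 <= a x)%E) ->
  (\esum_(x in A) a x <= \esum_(x in B) a x)%E.
Proof.
move=> AB a0; rewrite [leRHS](esumID A) //.
rewrite (_ : B `&` A = A); last exact/setIidr.
by rewrite leeDl // esum_ge0.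
Qed.

Lemma alg8 (R : realType) (p0 p1 p2 p3 n0 n1 n2 n3 c : R) :
  p0%:E = (p1%:E + p2%:E + c%:E * p3%:E)%E ->
  n0%:E = (n1%:E + n2%:E + c%:E * n3%:E)%E ->
  fine (p1%:E - n1%:E)%E =
  fine (p0%:E - n0%:E)%E - fine (p2%:E - n2%:E)%E - c * fine (p3%:E - n3%:E)%E.
Proof.
move=> H1 H2; have {H1} -> : p0 = p1 + p2 + c * p3 by apply: EFin_inj; rewrite H1.
have {H2} -> : n0 = n1 + n2 + c * n3 by apply: EFin_inj; rewrite H2.
rewrite -!EFinB /=; ring.
Qed.

Lemma fin_split (R : realType) (a b c d : \bar R) (r : R) :
  (0 <= b)%E -> (0 <= c)%E -> (0 <= d)%E -> 0 < r ->
  a = (b + c + r%:E * d)%E -> a \is a fin_num ->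
  [/\ b \is a fin_num, c \is a fin_num & d \is a fin_num].
Proof.
move=> b0 c0 d0 r0 -> .
have rd0 : (0 <= r%:E * d)%E by rewrite mule_ge0 // lee_fin ltW.
rewrite !ge0_fin_numE ?adde_ge0 // => H.
have Hb : (b < +oo)%E by apply: le_lt_trans H; rewrite -addeA leeDl // adde_ge0.
have Hc : (c < +oo)%E.
  by apply: le_lt_trans H; rewrite (addeC b) -addeA leeDl // adde_ge0.
have Hd : (r%:E * d < +oo)%E by apply: le_lt_trans H; rewrite leeDr // adde_ge0.
split => //.
clear H rd0; move: Hd d0; case: d => [x _ _|Hd _|] //; first by rewrite ltry.
by rewrite gt0_muley ?lte_fin // ltxx in Hd.
Qed.

Lemma core (R : realType) k (g : nat -> R) {J} (p : 'I_J.+1) L :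
  (0 < k)%N -> ((p < J)%N \/ forall i, g i = 1) -> Ffinite k g 0 J.+1 L ->
  Ffinite k g p.+1 J.+1 L /\
  F k g p.+1 J.+1 L = F k g p J.+1 L - F k g p J L - k%:R^-1 * F k g p J L.+1.
Proof.
move=> k0 Hg0 Hfin.
have Hg : forall n c, (c <= 1)%N -> g (mlast (ins p c n)) = g (mlast n).
  move=> n c _; case: Hg0 => [pJ|g1]; first by rewrite mlast_ins.
  by rewrite !g1.
have kp : 0 < (k%:R : R)^-1 by rewrite invr_gt0 ltr0n.
have sub : forall m, Fdom J.+1 m `<=` Fdom J.+1 0 by move=> m n _ i; rewrite ltn0.
have hZa : forall (c0 x : R), 0 < c0 -> `|(c0 * x)%:E|%E = (c0%:E * `|x%:E|)%E.
  by move=> c0 x c00; rewrite EFinM abseM gee0_abs // lee_fin ltW.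
have hZp : forall (c0 x : R), 0 < c0 ->
    maxe (c0 * x)%:E 0%E = (c0%:E * maxe x%:E 0%E)%E.
  by move=> c0 x c00; rewrite maxe_pMr ?lee_fin ?ltW // mule0 EFinM.
have hZn : forall (c0 x : R), 0 < c0 ->
    maxe (- (c0 * x)%:E)%E 0%E = (c0%:E * maxe (- x%:E)%E 0%E)%E.
  by move=> c0 x c00; rewrite maxe_pMr ?lee_fin ?ltW // mule0 muleN EFinM.
have hp0 : forall x : \bar R, (0 <= maxe x 0)%E.
  by move=> x; rewrite le_max lexx orbT.
have hn0 : forall x : \bar R, (0 <= maxe (- x) 0)%E.
  by move=> x; rewrite le_max lexx orbT.
have Habs := @esum_split R k g J p L abse k0 (fun x => abse_ge0 x) hZa Hg.
have Hpos := @esum_split R k g J p L (fun x => maxe x 0%E) k0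
  hp0 hZp Hg.
have Hneg := @esum_split R k g J p L (fun x => maxe (- x)%E 0%E) k0
  hn0 hZn Hg.
have fin_le : forall a b : \bar R, (0 <= a)%E -> (a <= b)%E ->
    b \is a fin_num -> a \is a fin_num.
  move=> a b a0 ab; rewrite !ge0_fin_numE //; last exact: le_trans ab.
  exact: le_lt_trans.
have fA0 : (\esum_(n in Fdom J.+1 p) `|Fterm k g J.+1 L n|)%E \is a fin_num.
  apply: (fin_le _ (\esum_(n in Fdom J.+1 0) `|Fterm k g J.+1 L n|)%E).
  - by apply: esum_ge0 => n _; exact: abse_ge0.
  - by apply: esum_subset => // x; exact: abse_ge0.
  - by move: Hfin; rewrite /Ffinite summableE.
have [fA1 fA2 fA3] := @fin_split R _ _ _ _ _ (esum_ge0 (fun n _ => abse_ge0 _)) (esum_ge0 (fun n _ => abse_ge0 _))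
  (esum_ge0 (fun n _ => abse_ge0 _)) kp
  Habs fA0.
split; first by rewrite /Ffinite summableE.
have hle1 : forall x : \bar R, (maxe x 0 <= `|x|)%E.
  by move=> x; rewrite ge_max lee_abs abse_ge0.
have hle2 : forall x : \bar R, (maxe (- x) 0 <= `|x|)%E.
  by move=> x; rewrite ge_max -abseN lee_abs abse_ge0.
have fP : forall J' L' (A : set {ffun 'I_J' -> nat}),
  (\esum_(n in A) `|Fterm k g J' L' n|)%E \is a fin_num ->
  (\esum_(n in A) maxe (Fterm k g J' L' n) 0)%E \is a fin_num /\
  (\esum_(n in A) maxe (- Fterm k g J' L' n) 0)%E \is a fin_num.
  move=> J' L' A fA; split; apply: (fin_le _ _ _ _ fA);
    by [apply: esum_ge0 | apply: le_esum].
have EP : forall J' m L', F k g m J' L' =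
  fine ((\esum_(n in Fdom J' m) maxe (Fterm k g J' L' n) 0) -
        (\esum_(n in Fdom J' m) maxe (- Fterm k g J' L' n) 0))%E.
  move=> J' m L'; rewrite /F; congr (fine (_ - _))%E; apply: eq_esum => n _.
    by rewrite funeposE.
  by rewrite funenegE.
rewrite !EP.
have [fP0 fN0] := fP _ _ _ fA0.
have [fP1 fN1] := fP _ _ _ fA1.
have [fP2 fN2] := fP _ _ _ fA2.
have [fP3 fN3] := fP _ _ _ fA3.
move: Hpos Hneg.
rewrite -(fineK fP0) -(fineK fP1) -(fineK fP2) -(fineK fP3).
rewrite -(fineK fN0) -(fineK fN1) -(fineK fN2) -(fineK fN3).
exact: alg8.
Qed.

Theorem lemmaA1 (R : realType) (k : nat) (g : nat -> R) :
  (1 <= k)%N ->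
  (forall J L : nat, (1 <= J)%N -> (J < k)%N -> Ffinite k g 0 J L) ->
  (forall J L m : nat, (J < k)%N -> (1 <= m)%N -> (m <= J - 1)%N ->
     Ffinite k g m J L /\
     F k g m J L = F k g m.-1 J L - F k g m.-1 J.-1 L
                   - k%:R^-1 * F k g m.-1 J.-1 L.+1) /\
  ((forall i : nat, g i = 1) ->
   forall J L : nat, (1 <= J)%N -> (J < k)%N ->
     Ffinite k g J J L /\
     F k g J J L = F k g J.-1 J L - F k g J.-1 J.-1 L
                   - k%:R^-1 * F k g J.-1 J.-1 L.+1).
Proof.
move=> k0 HF; split.
  move=> [|J] L [|m] Jk m1 mJ //.
  have mJ' : (m < J.+1)%N by lia.
  have pJ : (Ordinal mJ' < J)%N by rewrite /=; lia.
  exact: (@core R k g J (Ordinal mJ') L k0 (or_introl pJ) (HF J.+1 L isT Jk)).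
move=> g1 [|J] L J1 Jk //.
exact: (@core R k g J ord_max L k0 (or_intror g1) (HF J.+1 L isT Jk)).
Qed.
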